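(* Let $\mathcal{M}\subseteq 2^N$ be a matroid on $N=[n]$. Let the elements have distinct nonnegative weights with $w(\{1\})>\dots>w(\{n\})$. Let $k$ satisfy the standing assumptions below, let $p\in[\varepsilon(k),1/2]$, and let $r$ be a positive integer with $r\ge(1+\varepsilon(pk))pk$. Let $X_1,\dots,X_n\sim\mathrm{Ber}(2p)$ and $Y_1,\dots,Y_n\sim\mathrm{Ber}(1/2)$ be mutually independent. Set $S=\{i:X_i=1,Y_i=1\}$ and $T=\{i:X_i=1,Y_i=0\}$. Let $T^*\subseteq T$ be the set of elements of $T$ that improve $S$ with respect to $\mathcal{M}^r$, and let $S^*=\mathrm{OPT}(S,\mathcal{M}^r)$. Then $\mathbb{E}[w(T^* )]=\mathbb{E}[w(S^* )]$.
   Context: Matroids are identified with their families of independent sets. $\mathcal{M}^r$ is the $r$-fold union of $\mathcal{M}$: the family of sets partitionable into $r$ members of $\mathcal{M}$. $w(S)=\sum_{i\in S}w(\{i\})$. $\mathrm{OPT}(S,\mathcal{M}')=\arg\max_{U\subseteq S,\,U\in\mathcal{M}'}w(U)$, which is unique since weights are distinct. An element $i$ improves $S$ with respect to $\mathcal{M}'$ if $i\in\mathrm{OPT}(S\cup\{i\},\mathcal{M}')$. Standing assumptions: $\varepsilon(x)=C\sqrt{\log(n)/x}$, where $C$ is a sufficiently large absolute constant (e.g. $C\in[10,20]$, such that $\log(1/\varepsilon(k))-2$ is a positive integer), and $160^2\log n\le k\le n$. *)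

(* Defs.v *)
From HB Require Import structures.
From mathcomp Require Import all_boot all_order all_algebra.
From mathcomp Require Import reals exp.
Set Implicit Arguments. Unset Strict Implicit. Unset Printing Implicit Defensive.
Import Order.TTheory GRing.Theory Num.Theory.
Local Open Scope ring_scope.

(* Ground set N = [n] is represented by 'I_n; element i+1 of the paper is i. *)

Definition is_matroid (n : nat) (M : {set {set 'I_n}}) : Prop :=
  [/\ set0 \in M,
      (forall A B : {set 'I_n}, B \in M -> A \subset B -> A \in M) &
      (forall A B : {set 'I_n}, A \in M -> B \in M -> #|A| < #|B| ->
         exists2 x, x \in B :\: A & x |: A \in M)]%N.

(* r-fold union M^r: sets partitionable into r members of M
   (parts may be empty, as the empty set is independent). *)
Definition matroid_union (n r : nat) (M : {set {set 'I_n}}) : {set {set 'I_n}} :=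
  [set A : {set 'I_n} | [exists f : {ffun 'I_n -> 'I_r},
                          [forall j : 'I_r, [set x in A | f x == j] \in M]]].

Definition wt (R : realType) (n : nat) (w : 'I_n -> R) (A : {set 'I_n}) : R :=
  \sum_(i in A) w i.

Definition is_opt (R : realType) (n : nat) (w : 'I_n -> R)
  (S : {set 'I_n}) (M' : {set {set 'I_n}}) (U : {set 'I_n}) : bool :=
  [&& U \subset S, U \in M' &
      [forall V : {set 'I_n}, ((V \subset S) && (V \in M')) ==> (wt w V <= wt w U)]].

Definition OPT (R : realType) (n : nat) (w : 'I_n -> R)
  (S : {set 'I_n}) (M' : {set {set 'I_n}}) : {set 'I_n} :=
  odflt set0 [pick U | is_opt w S M' U].

Definition improves (R : realType) (n : nat) (w : 'I_n -> R)
  (M' : {set {set 'I_n}}) (S : {set 'I_n}) (i : 'I_n) : bool :=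
  i \in OPT w (i |: S) M'.

Definition eps (R : realType) (C : R) (n : nat) (x : R) : R :=
  C * Num.sqrt (ln (n%:R) / x).

Definition ber (R : realType) (q : R) (b : bool) : R := if b then q else 1 - q.

(* Outcome space: for each i, the pair (X_i, Y_i).  Mutual independence of
   X_1..X_n ~ Ber(2p), Y_1..Y_n ~ Ber(1/2) = product probability mass. *)
Definition outcome (n : nat) := {ffun 'I_n -> bool * bool}.

Definition prob (R : realType) (n : nat) (p : R) (xy : outcome n) : R :=
  \prod_(i < n) (ber (2 * p) (xy i).1 * ber (2^-1) (xy i).2).

Definition Expect (R : realType) (n : nat) (p : R) (f : outcome n -> R) : R :=
  \sum_(xy : outcome n) prob p xy * f xy.

Definition Sset (n : nat) (xy : outcome n) : {set 'I_n} :=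
  [set i | (xy i).1 && (xy i).2].
Definition Tset (n : nat) (xy : outcome n) : {set 'I_n} :=
  [set i | (xy i).1 && ~~ (xy i).2].

(* Main.v *)
Require Import Defs.
From HB Require Import structures.
From mathcomp Require Import all_boot all_order all_algebra.
From mathcomp Require Import reals exp.
From mathcomp Require Import lra.
Import Order.TTheory GRing.Theory Num.Theory.
Local Open Scope ring_scope.

Lemma OPT_sub (R : realType) (n : nat) (w : 'I_n -> R) S M' :
  OPT w S M' \subset S.
Proof.
rewrite /OPT; case: pickP => [U /andP[] //|_] /=; exact: sub0set.
Qed.

Definition flip {n : nat} (j : 'I_n) (xy : outcome n) : outcome n :=
  [ffun i => if i == j then ((xy i).1, ~~ (xy i).2) else xy i].

Lemma flipK (n : nat) (j : 'I_n) : involutive (@flip n j).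
Proof.
move=> xy; apply/ffunP => i; rewrite !ffunE; case: eqVneq => // _ /=.
by rewrite negbK; case: (xy i).
Qed.

Lemma prob_flip (R : realType) (n : nat) (p : R) (j : 'I_n) (xy : outcome n) :
  prob p (flip j xy) = prob p xy.
Proof.
apply: eq_bigr => i _; rewrite ffunE; case: eqVneq => // _ /=.
by congr (_ * _); case: (xy i).2 => /=; lra.
Qed.

Lemma wt_cond (R : realType) (n : nat) (w : 'I_n -> R) A :
  wt w A = \sum_j (if j \in A then w j else 0).
Proof. by rewrite /wt big_mkcond. Qed.

Theorem lemma3 (R : realType) (n : nat) (M : {set {set 'I_n}})
  (w : 'I_n -> R) (C : R) (k : nat) (p : R) (r : nat) :
  is_matroid M ->
  (forall i : 'I_n, 0 <= w i) ->
  (forall i j : 'I_n, (i < j)%N -> w j < w i) ->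
  10 <= C <= 20 ->
  (exists m : nat, (0 < m)%N /\ ln ((eps C n k%:R)^-1) - 2 = m%:R) ->
  160 ^+ 2 * ln (n%:R : R) <= k%:R ->
  (k <= n)%N ->
  eps C n k%:R <= p <= 2^-1 ->
  (0 < r)%N ->
  (1 + eps C n (p * k%:R)) * (p * k%:R) <= r%:R ->
  Expect p (fun xy => wt w [set i in Tset xy | improves w (matroid_union r M) (Sset xy) i])
  = Expect p (fun xy => wt w (OPT w (Sset xy) (matroid_union r M))).
Proof.
move=> _ _ _ _ _ _ _ _ _ _.
set M' := matroid_union r M.
rewrite /Expect.
under eq_bigr do rewrite wt_cond mulr_sumr.
under [RHS]eq_bigr do rewrite wt_cond mulr_sumr.
rewrite exchange_big [RHS]exchange_big /=.
apply: eq_bigr => j _.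
rewrite (reindex_inj (inv_inj (@flipK n j))) /=.
apply: eq_bigr => xy _.
rewrite prob_flip; congr (_ * _).
have Hj : flip j xy j = ((xy j).1, ~~ (xy j).2) by rewrite ffunE eqxx.
rewrite !inE /improves Hj /=.
have HS : j \in Sset xy = (xy j).1 && (xy j).2 by rewrite inE.
case E: ((xy j).1 && (xy j).2).
  have -> : j |: Sset (flip j xy) = Sset xy.
    apply/setP => i; rewrite !inE ffunE.
    case: eqVneq => [->|] //=; by rewrite E.
  by rewrite negbK E.
have -> : j \in OPT w (Sset xy) M' = false.
  apply/negbTE/negP => H; move: (subsetP (@OPT_sub R n w (Sset xy) M') j H); by rewrite HS E.
by rewrite negbK E.
Qed.
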